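(* Let $J,K,L\ge 1$ be integers (with $K=0$ or $L=0$ also allowed, in which case the corresponding sums are absent), let $p,q,n_1,\dots,n_J$ be positive integers, $n=\sum_{j=1}^J n_j$, and let $\mathbf X_\cdot=[\mathbf X_1,\dots,\mathbf X_J]\in\mathbb R^{p\times n}$ and $\mathbf Y_\cdot=[\mathbf Y_1,\dots,\mathbf Y_J]\in\mathbb R^{q\times n}$ with $\mathbf X_j\in\mathbb R^{p\times n_j}$, $\mathbf Y_j\in\mathbb R^{q\times n_j}$. Let $\mathbf C_Y\in\{0,1\}^{J\times K}$ and $\mathbf C_S\in\{0,1\}^{J\times L}$, and for $k=1,\dots,K$ let $\mathbf Y_\cdot^{(k)}=[\mathbf Y_1^{(k)},\dots,\mathbf Y_J^{(k)}]$ where $\mathbf Y_j^{(k)}=\mathbf Y_j$ if $\mathbf C_Y[j,k]=1$ and $\mathbf Y_j^{(k)}=\mathbf 0_{q\times n_j}$ otherwise. For $l=1,\dots,L$ let $\mathcal S_l$ be the set of matrices $\mathbf S=[\mathbf S_1,\dots,\mathbf S_J]\in\mathbb R^{p\times n}$ (blocks $\mathbf S_j\in\mathbb R^{p\times n_j}$) with $\mathbf S_j=\mathbf 0$ whenever $\mathbf C_S[j,l]=0$. Let $\lambda_B^{(k)}>0$ and $\lambda_S^{(l)}>0$. Consider $$F(\{\mathbf B_k\},\{\mathbf S^{(l)}\})=\tfrac12\Big\|\mathbf X_\cdot-\sum_{k=1}^K\mathbf B_k\mathbf Y_\cdot^{(k)}-\sum_{l=1}^L\mathbf S^{(l)}\Big\|_F^2+\sum_{k=1}^K\lambda_B^{(k)}\|\mathbf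 B_k\|_*+\sum_{l=1}^L\lambda_S^{(l)}\|\mathbf S^{(l)}\|_*,$$ minimized over $\mathbf B_k\in\mathbb R^{p\times q}$ and $\mathbf S^{(l)}\in\mathcal S_l$, and, for integers $r_B\ge\min(p,q)$ and $r_S\ge\min(p,n)$, $$G=\tfrac12\Big\{\Big\|\mathbf X_\cdot-\sum_{k=1}^K\mathbf U_B^{(k)}\mathbf V_B^{(k)T}\mathbf Y_\cdot^{(k)}-\sum_{l=1}^L\mathbf U_S^{(l)}\mathbf V_S^{(l)T}\Big\|_F^2+\sum_{k=1}^K\lambda_B^{(k)}\big(\|\mathbf U_B^{(k)}\|_F^2+\|\mathbf V_B^{(k)}\|_F^2\big)+\sum_{l=1}^L\lambda_S^{(l)}\big(\|\mathbf U_S^{(l)}\|_F^2+\|\mathbf V_S^{(l)}\|_F^2\big)\Big\},$$ minimized over $\mathbf U_B^{(k)}\in\mathbb R^{p\times r_B}$, $\mathbf V_B^{(k)}\in\mathbb R^{q\times r_B}$, $\mathbf U_S^{(l)}\in\mathbb R^{p\times r_S}$, $\mathbf V_S^{(l)}\in\mathbb R^{n\times r_S}$ such that $\mathbf U_S^{(l)}\mathbf V_S^{(l)T}\in\mathcal S_l$. Then the two problems have the same minimal value, and the solutions coincide: $(\{\mathbf B_k\},\{\mathbf S^{(l)}\})$ minimizes $F$ if and only if there is a minimizer of $G$ with $\mathbf B_k=\mathbf U_B^{(k)}\mathbf V_B^{(k)T}$ for all $k$ and $\mathbf S^{(l)}=\mathbf U_S^{(l)}\mathbf V_S^{(l)T}$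 for all $l$.
   Context: $\|\cdot\|_*$ denotes the nuclear norm (sum of singular values) and $\|\cdot\|_F$ the Frobenius norm. The matrices $\mathbf C_Y,\mathbf C_S$ are fixed binary indicator matrices specifying on which cohorts each covariate-driven module $\mathbf B_k\mathbf Y_\cdot^{(k)}$ and each auxiliary module $\mathbf S^{(l)}$ is present. *)

(* Defs.v *)
From HB Require Import structures.
From mathcomp Require Import all_boot all_order all_algebra.
From mathcomp Require Import reals.
From Stdlib Require Import ClassicalEpsilon.
Set Implicit Arguments. Unset Strict Implicit. Unset Printing Implicit Defensive.
Import Order.TTheory GRing.Theory Num.Theory.
Local Open Scope ring_scope.

Definition frob2 (R : realType) (m n : nat) (A : 'M[R]_(m, n)) : R :=
  \sum_(i < m) \sum_(j < n) A i j ^+ 2.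

Definition orthomx (R : realType) (m : nat) (U : 'M[R]_m) : Prop :=
  U^T *m U = 1%:M.

Definition is_svd (R : realType) (m n : nat) (A : 'M[R]_(m, n))
  (U : 'M[R]_m) (D : 'M[R]_(m, n)) (V : 'M[R]_n) : Prop :=
  [/\ orthomx U, orthomx V,
      (forall (i : 'I_m) (j : 'I_n), (i : nat) <> j -> D i j = 0),
      (forall (i : 'I_m) (j : 'I_n), (i : nat) = j -> 0 <= D i j) &
      A = U *m D *m V^T].

Definition svd_diag (R : realType) (m n : nat) (A : 'M[R]_(m, n)) : 'M[R]_(m, n) :=
  epsilon (inhabits (0 : 'M[R]_(m, n)))
    (fun D => exists U V, is_svd A U D V).

Definition nucnorm (R : realType) (m n : nat) (A : 'M[R]_(m, n)) : R :=
  \sum_(i < m) \sum_(j < n) (if (i : nat) == j then svd_diag A i j else 0).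

Definition Ymask (R : realType) (J q : nat) (nj : 'I_J -> nat)
  (Y : forall j : 'I_J, 'M[R]_(q, nj j)) (c : 'I_J -> bool)
  : 'M[R]_(q, \sum_(j < J) nj j) :=
  \mxrow_(j < J) (if c j then Y j else 0).

Definition inS (R : realType) (J p : nat) (nj : 'I_J -> nat) (c : 'I_J -> bool)
  (S : 'M[R]_(p, \sum_(j < J) nj j)) : Prop :=
  forall j : 'I_J, c j = false -> submxrow S j = 0.

Definition Fobj (R : realType) (J K L p q : nat) (nj : 'I_J -> nat)
  (X : forall j : 'I_J, 'M[R]_(p, nj j)) (Y : forall j : 'I_J, 'M[R]_(q, nj j))
  (CY : 'I_J -> 'I_K -> bool) (lamB : 'I_K -> R) (lamS : 'I_L -> R)
  (B : 'I_K -> 'M[R]_(p, q)) (S : 'I_L -> 'M[R]_(p, \sum_(j < J) nj j)) : R :=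
  frob2 (\mxrow_(j < J) X j - \sum_(k < K) B k *m Ymask Y (fun j => CY j k)
         - \sum_(l < L) S l) / 2
  + \sum_(k < K) lamB k * nucnorm (B k)
  + \sum_(l < L) lamS l * nucnorm (S l).

Definition Gobj (R : realType) (J K L p q rB rS : nat) (nj : 'I_J -> nat)
  (X : forall j : 'I_J, 'M[R]_(p, nj j)) (Y : forall j : 'I_J, 'M[R]_(q, nj j))
  (CY : 'I_J -> 'I_K -> bool) (lamB : 'I_K -> R) (lamS : 'I_L -> R)
  (UB : 'I_K -> 'M[R]_(p, rB)) (VB : 'I_K -> 'M[R]_(q, rB))
  (US : 'I_L -> 'M[R]_(p, rS)) (VS : 'I_L -> 'M[R]_(\sum_(j < J) nj j, rS)) : R :=
  (frob2 (\mxrow_(j < J) X j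
          - \sum_(k < K) UB k *m (VB k)^T *m Ymask Y (fun j => CY j k)
          - \sum_(l < L) US l *m (VS l)^T)
   + \sum_(k < K) lamB k * (frob2 (UB k) + frob2 (VB k))
   + \sum_(l < L) lamS l * (frob2 (US l) + frob2 (VS l))) / 2.

(* Main.v *)
From Pilot Require Import Defs.
From HB Require Import structures.
From mathcomp Require Import all_boot all_order all_algebra.
From mathcomp Require Import reals.
From mathcomp Require Import complex.
From mathcomp Require Import boolp classical_sets topology normedtype matrix_normedtype derive.
From mathcomp Require Import ring lra zify.
From Stdlib Require Import ClassicalEpsilon.
Import Pilot.Defs.
Set Implicit Arguments. Unset Strict Implicit. Unset Printing Implicit Defensive.
Import Order.TTheory GRing.Theory Num.Theory.
Import numFieldTopology.Exports numFieldNormedType.Exports.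
Local Open Scope ring_scope.


Section LA.
Variable R : realType.

Lemma orthomx_r m (U : 'M[R]_m) : orthomx U -> U *m U^T = 1%:M.
Proof. by move=> h; apply: mulmx1C. Qed.

Lemma frob2_tr m n (A : 'M[R]_(m,n)) : frob2 A = \tr (A^T *m A).
Proof.
rewrite /frob2 /mxtrace exchange_big; apply: eq_bigr => j _; rewrite mxE.
by apply: eq_bigr => i _; rewrite !mxE expr2.
Qed.

Lemma frob2_ortho m n (P : 'M[R]_m) (A : 'M[R]_(m,n)) :
  orthomx P -> frob2 (P *m A) = frob2 A.
Proof.
by move=> hP; rewrite !frob2_tr trmx_mul mulmxA -(mulmxA _ _ P) hP mulmx1.
Qed.

Lemma frob2_ge0 m n (A : 'M[R]_(m,n)) : 0 <= frob2 A.
Proof. by apply: sumr_ge0 => i _; apply: sumr_ge0 => j _; apply: sqr_ge0. Qed.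

Lemma frob2_eq0 m n (A : 'M[R]_(m,n)) : frob2 A = 0 -> A = 0.
Proof.
move=> /eqP; rewrite psumr_eq0; last by move=> i _; apply: sumr_ge0 => j _; apply: sqr_ge0.
move=> /allP h; apply/matrixP => i j; rewrite mxE.
have := h i (mem_index_enum _); rewrite /= psumr_eq0; last by move=> *; apply: sqr_ge0.
by move=> /allP /(_ j (mem_index_enum _)) /=; rewrite sqrf_eq0 => /eqP.
Qed.

Lemma frob2_entry m n (A : 'M[R]_(m,n)) i j : A i j ^+ 2 <= frob2 A.
Proof.
rewrite /frob2 (bigD1 i) //= (bigD1 j) //= -addrA lerDl.
apply: addr_ge0; first by apply: sumr_ge0 => *; apply: sqr_ge0.
by apply: sumr_ge0 => *; apply: sumr_ge0 => *; apply: sqr_ge0.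
Qed.

End LA.
Section HH.
Variable R : realType.

Definition e0 n : 'rV[R]_n.+1 := delta_mx 0 ord0.

Definition hh n (u : 'rV[R]_n.+1) : 'M[R]_n.+1 :=
  let w := u - e0 n in
  if w == 0 then 1%:M else 1%:M - (2 / (w *m w^T) 0 0) *: (w^T *m w).

Lemma rv_dot_ge0 n (w : 'rV[R]_n) : 0 <= (w *m w^T) 0 0.
Proof. by rewrite mxE; apply: sumr_ge0 => i _; rewrite mxE -expr2 sqr_ge0. Qed.

Lemma rv_dot_eq0 n (w : 'rV[R]_n) : (w *m w^T) 0 0 = 0 -> w = 0.
Proof.
rewrite mxE => /eqP; rewrite psumr_eq0; last by move=> i _; rewrite mxE -expr2 sqr_ge0.
move=> /allP h; apply/rowP => j; rewrite mxE.
by have := h j (mem_index_enum _); rewrite /= mxE -expr2 sqrf_eq0 => /eqP.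
Qed.

Lemma hh_sym n (u : 'rV[R]_n.+1) : (hh u)^T = hh u.
Proof.
rewrite /hh; case: ifP => _; first by rewrite trmx1.
by rewrite linearB /= trmx1 linearZ /= trmx_mul trmxK.
Qed.

Lemma e0_mul n k (A : 'M[R]_(n.+1, k)) : e0 n *m A = row ord0 A.
Proof. by rewrite rowE. Qed.

Lemma dot_e0 n (u : 'rV[R]_n.+1) : (u *m (e0 n)^T) 0 0 = u 0 ord0.
Proof.
rewrite -[u *m _]trmxK trmx_mul trmxK /e0 -rowE !mxE //.
Qed.

Lemma mxBE m k (A B : 'M[R]_(m,k)) i j : (A - B) i j = A i j - B i j.
Proof. by rewrite !mxE. Qed.
Lemma mxDE m k (A B : 'M[R]_(m,k)) i j : (A + B) i j = A i j + B i j.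
Proof. by rewrite !mxE. Qed.
Lemma mxZE m k a (A : 'M[R]_(m,k)) i j : (a *: A) i j = a * A i j.
Proof. by rewrite !mxE. Qed.

Lemma mx11E (a : 'M[R]_1) : a = (a 0 0)%:M.
Proof. by rewrite {1}[a]mx11_scalar. Qed.

Lemma hh_prop n (u : 'rV[R]_n.+1) : (u *m u^T) 0 0 = 1 ->
  [/\ hh u *m hh u = 1%:M, e0 n *m hh u = u & orthomx (hh u)].
Proof.
move=> uu.
suff [h1 h2] : hh u *m hh u = 1%:M /\ e0 n *m hh u = u.
  by split => //; rewrite /orthomx hh_sym.
rewrite /hh; case: eqP => [/eqP|/eqP wne0].
  by rewrite subr_eq0 => /eqP ->; rewrite mul1mx mulmx1.
set w := u - e0 n.
set s := (w *m w^T) 0 0.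
have s_gt0 : 0 < s.
  rewrite lt_def rv_dot_ge0 andbT; apply/eqP => /rv_dot_eq0 h.
  by move: wne0; rewrite -/w h eqxx.
have ee : (e0 n *m (e0 n)^T) 0 0 = 1 by rewrite dot_e0 /e0 mxE.
have eu : (e0 n *m u^T) 0 0 = u 0 ord0.
  by rewrite -[e0 n *m _]trmxK trmx_mul trmxK mxE dot_e0.
have sE : s = 2 - 2 * u 0 ord0.
  rewrite /s /w !linearB /= mulmxBl mulmxBl !mxBE uu eu ee dot_e0.
  ring.
set W := w^T *m w.
have WW : W *m W = s *: W.
  by rewrite /W mulmxA -(mulmxA w^T) [w *m w^T]mx11E -/s mul_mx_scalar -scalemxAl.
have sne0 : s != 0 by rewrite gt_eqF.
split.
  rewrite mulmxBl !mulmxBr mulmx1 -!scalemxAl -!scalemxAr mul1mx WW !scalerA.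
  have -> : 2 / s * (2 / s) * s = 2 / s + 2 / s by field.
  by rewrite scalerDl opprB mulmx1 addrK subrK.
rewrite mulmxBr mulmx1 -scalemxAr /W mulmxA [e0 n *m w^T]mx11E mul_scalar_mx scalerA.
have -> : (e0 n *m w^T) 0 0 = u 0 ord0 - 1.
  by rewrite /w linearB /= mulmxBr mxBE eu ee.
have -> : 2 / s * (u 0 ord0 - 1) = -1.
  rewrite sE; rewrite sE in sne0; field.
  by move: sne0; apply: contra => /eqP h; apply/eqP; lra.
by rewrite scaleN1r opprK /w addrC subrK.
Qed.

End HH.
Section EIG.
Variable R : realType.

Lemma sym_eig n (M : 'M[R]_n) : M^T = M -> M != 0 ->
  exists (l : R) (v : 'rV[R]_n), [/\ l != 0, v != 0 & v *m M = l *: v].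
Proof.
move=> Msym Mne0.
pose toC := real_complex R.
pose MC : 'M[R[i]]_n := map_mx toC M.
have MCreal : MC \is a realmx.
  by apply/mxOverP => i j; rewrite mxE; apply/complex_realP; exists (M i j).
have MCsym : MC \is symmetricmx.
  apply/is_hermitianmxP; rewrite expr0 scale1r map_mx_id // /MC map_trmx Msym //.
have MCherm : MC \is hermsymmx by apply: realsym_hermsym.
have MCnormal := hermitian_normalmx MCherm.
have MCE := orthomx_spectralP MCnormal.
set P := spectralmx MC in MCE.
set d := spectral_diag MC in MCE.
have Punit : P \in unitmx by apply: spectral_unit.
have PMC : P *m MC = diag_mx d *m P.
  by rewrite {1}MCE !mulmxA mulmxV // mul1mx.
have [i di] : exists i, d 0 i != 0.
  apply/existsP; apply: contraR Mne0 => /existsPn h.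
  have d0 : d = 0 by apply/rowP => j; move: (h j); rewrite negbK mxE => /eqP.
  apply/eqP; apply: (@map_mx_inj _ _ toC).
  by rewrite map_mx0 -/MC MCE d0 raddf0 mulmx0 mul0mx.
have dreal : d 0 i \is Num.real.
  by have /mxOverP := hermitian_spectral_diag_real MCherm; apply.
have [lam dE] := complex_realP _ dreal.
pose w := row i P.
have wne0 : w != 0.
  apply/negP => /eqP w0.
  have := congr1 (fun A => row i A) (mulmxV Punit).
  rewrite /= row_mul -/w w0 mul0mx => /rowP /(_ i).
  by rewrite !mxE eqxx /= => /eqP; rewrite eq_sym oner_eq0.
have weig : w *m (MC - (d 0 i)%:M) = 0.
  by rewrite mulmxBr /w -row_mul PMC row_mul row_diag_mx -scalemxAl -rowE mul_mx_scalar subrr.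
have detC : \det (MC - (d 0 i)%:M) = 0.
  by apply/eqP/det0P; exists w.
have : \det (M - lam%:M) = 0.
  apply: (@complexI R); rewrite rmorph0 -det_map_mx map_mxB map_scalar_mx -/MC; by move: detC; rewrite dE.
move/eqP/det0P => [v vne0 vE].
exists lam, v; split => //.
  by apply: contra di => /eqP l0; rewrite dE l0.
by move/eqP: vE; rewrite mulmxBr mul_mx_scalar subr_eq0 => /eqP.
Qed.
End EIG.
Section SVD.
Variable R : realType.

Definition diagc m n (D : 'M[R]_(m,n)) :=
  (forall (i : 'I_m) (j : 'I_n), (i : nat) <> j -> D i j = 0) /\
  (forall (i : 'I_m) (j : 'I_n), (i : nat) = j -> 0 <= D i j).

Lemma diag_block m n (s : R) (D : 'M[R]_(m,n)) : 0 <= s -> diagc D ->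
  diagc (block_mx (s%:M : 'M_1) 0 0 D : 'M_(1 + m, 1 + n)).
Proof.
move=> s0 [D1 D2]; split => i j.
  case: (split_ordP i) => i' ->; case: (split_ordP j) => j' -> /=.
  - by rewrite !ord1.
  - by rewrite block_mxEur mxE.
  - by rewrite block_mxEdl mxE.
  - by rewrite block_mxEdr => h; apply: D1 => e; apply: h; rewrite e.
case: (split_ordP i) => i' ->; case: (split_ordP j) => j' -> /=.
- by rewrite block_mxEul !ord1 mxE.
- by rewrite block_mxEur mxE.
- by rewrite block_mxEdl mxE.
- by rewrite block_mxEdr => h; apply: D2; case: h.
Qed.

Lemma orthomx1 m : orthomx (1%:M : 'M[R]_m).
Proof. by rewrite /orthomx trmx1 mulmx1. Qed.

Lemma orthomxM m (P Q : 'M[R]_m) : orthomx P -> orthomx Q -> orthomx (P *m Q).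
Proof.
rewrite /orthomx => hP hQ.
by rewrite trmx_mul mulmxA -(mulmxA Q^T) hP mulmx1 hQ.
Qed.

Lemma orthomx_lift0 m (P : 'M[R]_m) : orthomx P -> orthomx (lift0_mx P).
Proof.
rewrite /orthomx /lift0_mx => hP.
rewrite tr_block_mx !trmx0 trmx1 mulmx_block.
rewrite !mulmx0 !mul0mx !mulmx1 !addr0 !add0r hP.
by rewrite -(scalar_mx_block 1 m 1).
Qed.

Lemma svd0 m n : is_svd (0 : 'M[R]_(m,n)) 1%:M 0 1%:M.
Proof.
split; try exact: orthomx1.
- by move=> i j _; rewrite mxE.
- by move=> i j _; rewrite mxE.
- by rewrite mulmx0 mul0mx.
Qed.


Lemma unit_normalize n (x : 'rV[R]_n) : x != 0 ->
  exists c : R, 0 < c /\ ((c *: x) *m (c *: x)^T) 0 0 = 1.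
Proof.
move=> xne0; set t := (x *m x^T) 0 0.
have t_gt0 : 0 < t.
  rewrite lt_def rv_dot_ge0 andbT; apply/eqP => /rv_dot_eq0 h.
  by move: xne0; rewrite h eqxx.
exists (Num.sqrt t)^-1; split; first by rewrite invr_gt0 sqrtr_gt0.
rewrite linearZ /= -scalemxAl -scalemxAr !mxZE -/t mulrA -expr2 exprVn sqr_sqrtr.
  by rewrite mulVf // gt_eqF.
exact: ltW.
Qed.

Lemma svd_exists m n (A : 'M[R]_(m,n)) : exists P D Q, is_svd A P D Q.
Proof.
elim: n m A => [|n IH] m A.
  by exists 1%:M, 0, 1%:M; rewrite thinmx0; apply: svd0.
case: m A => [|m] A.
  by exists 1%:M, 0, 1%:M; rewrite flatmx0; apply: svd0.
have [->|Ane0] := eqVneq A 0.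
  by exists 1%:M, 0, 1%:M; apply: svd0.
set M := A^T *m A.
have Msym : M^T = M by rewrite /M trmx_mul trmxK.
have Mne0 : M != 0.
  apply: contra Ane0 => /eqP M0; apply/eqP; apply: frob2_eq0.
  by rewrite frob2_tr -/M M0 mxtrace0.
have [lam [x [lne0 xne0 xE]]] := sym_eig Msym Mne0.
have [c [c_gt0 vv]] := unit_normalize xne0.
set v := c *: x in vv.
have vE : v *m M = lam *: v by rewrite /v -scalemxAl xE scalerA mulrC -scalerA.
set y := v *m A^T.
have yy : (y *m y^T) 0 0 = lam.
  by rewrite /y trmx_mul trmxK mulmxA -(mulmxA v) -/M vE -scalemxAl mxZE vv mulr1.
have lam_gt0 : 0 < lam by rewrite lt_def lne0 -yy rv_dot_ge0.
set sg := Num.sqrt lam.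
have sg_gt0 : 0 < sg by rewrite sqrtr_gt0.
set u := sg^-1 *: y.
have uu : (u *m u^T) 0 0 = 1.
  rewrite /u linearZ /= -scalemxAl -scalemxAr !mxZE yy mulrA -expr2 exprVn sqr_sqrtr.
    by rewrite mulVf // gt_eqF.
  exact: ltW.
have uA : u *m A = sg *: v.
  rewrite /u -scalemxAl /y -mulmxA -/M vE scalerA; congr (_ *: _).
  have sg2 : sg ^+ 2 = lam by rewrite sqr_sqrtr // ltW.
  rewrite -sg2; field; exact: lt0r_neq0.
have Av : A *m v^T = sg *: u^T.
  by rewrite /u [(sg^-1 *: y)^T]linearZ /= scalerA mulfV ?gt_eqF // scale1r /y trmx_mul trmxK.
have [P0P0 eP0 oP0] := hh_prop uu.
have [Q0Q0 eQ0 oQ0] := hh_prop vv.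
set P0 := hh u in P0P0 eP0 oP0.
set Q0 := hh v in Q0Q0 eQ0 oQ0.
set B := P0 *m A *m Q0.
have row0 : e0 R m *m B = sg *: e0 R n.
  rewrite /B !mulmxA eP0 uA -scalemxAl -eQ0 -mulmxA Q0Q0 mulmx1 //.
have col0 : B *m (e0 R n)^T = sg *: (e0 R m)^T.
  rewrite /B -mulmxA -[Q0 *m _]trmxK trmx_mul trmxK /Q0 hh_sym -/Q0 eQ0.
  rewrite -mulmxA Av -scalemxAr; congr (_ *: _).
  by rewrite -eP0 trmx_mul /P0 hh_sym -/P0 mulmxA P0P0 mul1mx.
have rowB j : B 0 j = sg * (e0 R n) 0 j.
  by have := row0; rewrite e0_mul => /rowP /(_ j); rewrite !mxE.
have colB i : B i 0 = sg * (e0 R m) 0 i.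
  have col0' : e0 R n *m B^T = sg *: e0 R m.
    by rewrite -[e0 R n *m _]trmxK trmx_mul trmxK col0 linearZ /= trmxK.
  by have := col0'; rewrite e0_mul => /rowP /(_ i); rewrite !mxE.
have BdefE : B = P0 *m A *m Q0 by [].
clearbody B.
set A' : 'M_(m, n) := drsubmx (B : 'M_(1 + m, 1 + n)).
have BE : B = block_mx (sg%:M : 'M_1) 0 0 A' :> 'M_(1 + m, 1 + n).
  rewrite -{1}[B](@submxK _ 1 m 1 n); congr block_mx.
  - apply/matrixP => i j; rewrite !ord1 !mxE /=.
    have -> : lshift m (0 : 'I_1) = 0 :> 'I_m.+1 by apply: val_inj.
    have -> : lshift n (0 : 'I_1) = 0 :> 'I_n.+1 by apply: val_inj.
    by rewrite rowB /e0 mxE /= mulr1.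
  - apply/matrixP => i j; rewrite !ord1 !mxE /=.
    have -> : lshift m (0 : 'I_1) = 0 :> 'I_m.+1 by apply: val_inj.
    by rewrite rowB /e0 mxE /= mulr0.
  - apply/matrixP => i j; rewrite !ord1 !mxE /=.
    have -> : lshift n (0 : 'I_1) = 0 :> 'I_n.+1 by apply: val_inj.
    by rewrite colB /e0 mxE /= mulr0.
have [P' [D' [Q' [oP' oQ' D1 D2 A'E]]]] := IH _ A'.
exists (P0 *m lift0_mx P'), (block_mx (sg%:M : 'M_1) 0 0 D'), (Q0 *m lift0_mx Q').
have [Dd1 Dd2] := diag_block (ltW sg_gt0) (conj D1 D2).
split => //.
- exact: orthomxM oP0 (orthomx_lift0 oP').
- exact: orthomxM oQ0 (orthomx_lift0 oQ').
have AB : A = P0 *m B *m Q0.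
  by rewrite BdefE !mulmxA P0P0 mul1mx -mulmxA Q0Q0 mulmx1.
have LB : lift0_mx P' *m block_mx (sg%:M : 'M_1) 0 0 D' *m (lift0_mx Q')^T = B.
  rewrite BE A'E /lift0_mx tr_block_mx !trmx0 trmx1 !mulmx_block.
  rewrite !mulmx0 !mul0mx !mulmx1 !addr0 !add0r; congr block_mx; [exact: mul1mx | exact: mul0mx].
rewrite AB -LB trmx_mul /Q0 hh_sym -/Q0 !mulmxA //.
Qed.

End SVD.
Section NUC.
Variable R : realType.

Definition trd m n (D : 'M[R]_(m,n)) : R :=
  \sum_(i < m) \sum_(j < n) (if (i : nat) == j then D i j else 0).

Lemma sum_ind (a r : nat) (x : R) :
  \sum_(k < r) (if a == k :> nat then x else 0) = if (a < r)%N then x else 0.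
Proof.
elim: r => [|r IH]; first by rewrite big_ord0 ltn0.
rewrite big_ord_recr /= IH.
case: (ltngtP a r) => [h|h|->].
- by rewrite addr0 (ltn_trans h (ltnSn r)).
- by rewrite addr0 ltnS leqNgt h.
- by rewrite add0r ltnSn.
Qed.

Lemma sum_delta m (i : 'I_m) (f : 'I_m -> R) :
  \sum_(i' < m) (if (i' : nat) == i then f i' else 0) = f i.
Proof. by rewrite -big_mkcond /=; apply: big_pred1_eq. Qed.

Lemma svd_D m n (A : 'M[R]_(m,n)) P D Q : is_svd A P D Q -> D = P^T *m A *m Q.
Proof.
case=> oP oQ _ _ ->.
by rewrite !mulmxA oP mul1mx -mulmxA oQ mulmx1.
Qed.

Lemma frob2_orthoT m n (P : 'M[R]_m) (A : 'M[R]_(m,n)) :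
  orthomx P -> frob2 (P^T *m A) = frob2 A.
Proof. by move=> oP; apply: frob2_ortho; rewrite /orthomx trmxK; apply: orthomx_r. Qed.

Lemma nuc_le m n r (A : 'M[R]_(m,n)) P D Q (U : 'M[R]_(m,r)) (V : 'M[R]_(n,r)) :
  is_svd A P D Q -> A = U *m V^T -> trd D <= (frob2 U + frob2 V) / 2.
Proof.
move=> svdA AE.
have oP : orthomx P by case: svdA.
have oQ : orthomx Q by case: svdA.
set U' := P^T *m U; set V' := Q^T *m V.
have DE : D = U' *m V'^T.
  by rewrite (svd_D svdA) AE /U' /V' trmx_mul trmxK !mulmxA.
rewrite -(frob2_orthoT U oP) -(frob2_orthoT V oQ) -/U' -/V'.
clearbody U' V'.
pose ru i := \sum_(k < r) U' i k ^+ 2.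
pose rv j := \sum_(k < r) V' j k ^+ 2.
have Dle i j : D i j <= (ru i + rv j) / 2.
  rewrite DE mxE /ru /rv -big_split /= mulr_suml; apply: ler_sum => k _.
  rewrite mxE; have := sqr_ge0 (U' i k - V' j k); nra.
apply: (@le_trans _ _ (\sum_(i < m) \sum_(j < n) (if (i : nat) == j then (ru i + rv j) / 2 else 0))).
  apply: ler_sum => i _; apply: ler_sum => j _; case: ifP => // _.
have e1 : \sum_(i < m) \sum_(j < n) (if (i : nat) == j then (ru i + rv j) / 2 else 0)
   = (\sum_(i < m) \sum_(j < n) (if (i : nat) == j then ru i else 0)
     + \sum_(i < m) \sum_(j < n) (if (i : nat) == j then rv j else 0)) / 2.
  rewrite -big_split mulr_suml; apply: eq_bigr => i _.
  rewrite -big_split mulr_suml; apply: eq_bigr => j _.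
  by case: ifP => _ //; rewrite /= addr0 mul0r.
rewrite e1 ler_pM2r ?invr_gt0 ?ltr0n //; apply: lerD.
  apply: ler_sum => i _; rewrite sum_ind; case: ifP => _ //.
  by apply: sumr_ge0 => k _; apply: sqr_ge0.
rewrite exchange_big; apply: ler_sum => j _.
under eq_bigr => i _ do rewrite eq_sym.
rewrite sum_ind; case: ifP => _ //.
by apply: sumr_ge0 => k _; apply: sqr_ge0.
Qed.


Lemma sum_delta2 m (i' : 'I_m) (b : 'I_m -> bool) (g : 'I_m -> R) :
  \sum_(i < m) (if ((i' : nat) == i) && b i then g i else 0) = if b i' then g i' else 0.
Proof.
rewrite -(sum_delta i' (fun i => if b i then g i else 0)).
by apply: eq_bigr => i _; rewrite eq_sym; case: eqP.
Qed.

Lemma nuc_fact m n r (A : 'M[R]_(m,n)) P D Q :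
  is_svd A P D Q -> (minn m n <= r)%N ->
  exists (U : 'M[R]_(m,r)) (V : 'M[R]_(n,r)),
    A = U *m V^T /\ (frob2 U + frob2 V) / 2 = trd D.
Proof.
move=> svdA mr.
have [oP oQ D1 D2 AE] := svdA.
pose ddn (t : nat) := \sum_(i < m) \sum_(j < n)
   (if ((i : nat) == t) && ((j : nat) == t) then D i j else 0).
have ddn_ge0 t : 0 <= ddn t.
  apply: sumr_ge0 => i _; apply: sumr_ge0 => j _.
  case: ifP => // /andP [/eqP e1 /eqP e2]; apply: D2; by rewrite e1 e2.
have ddn_diag (i : 'I_m) (j : 'I_n) : (i : nat) = j -> ddn i = D i j.
  move=> e; rewrite /ddn (bigD1 i) //= [X in _ + X]big1; last first.
    move=> i' ne; apply: big1 => j' _.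
    by case: eqP => //= /val_inj h; move: ne; rewrite h eqxx.
  rewrite addr0 eqxx /=.
  under eq_bigr => j' _ do rewrite e.
  exact: sum_delta.
have ddn_n t : (n <= t)%N -> ddn t = 0.
  move=> h; apply: big1 => i _; apply: big1 => j _.
  by rewrite (@ltn_eqF j t) ?andbF // (leq_trans (ltn_ord j) h).
have ddn_m t : (m <= t)%N -> ddn t = 0.
  move=> h; apply: big1 => i _; apply: big1 => j _.
  by rewrite (@ltn_eqF i t) ?andbF // (leq_trans (ltn_ord i) h).
pose S1 : 'M[R]_(m, r) := \matrix_(i, k) (if (i : nat) == k then Num.sqrt (ddn i) else 0).
pose S2 : 'M[R]_(n, r) := \matrix_(j, k) (if (j : nat) == k then Num.sqrt (ddn j) else 0).
have SS : S1 *m S2^T = D.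
  apply/matrixP => i j; rewrite mxE.
  have [e|ne] := eqVneq (i : nat) j.
    under eq_bigr => k _ do rewrite !mxE -e.
    have -> : \sum_(k < r) (if (i : nat) == k then Num.sqrt (ddn i) else 0) *
          (if (i : nat) == k then Num.sqrt (ddn i) else 0) =
          \sum_(k < r) (if (i : nat) == k then ddn i else 0).
      apply: eq_bigr => k _; case: ifP => _; last by rewrite mul0r.
      by rewrite -expr2 sqr_sqrtr.
    rewrite sum_ind.
    have -> : (i < r)%N.
      by apply: leq_trans mr; rewrite leq_min ltn_ord e ltn_ord.
    exact: ddn_diag.
  rewrite D1; last by move=> h; rewrite h eqxx in ne.
  apply: big1 => k _; rewrite !mxE.
  case: eqP => [ik|_]; last by rewrite mul0r.
  case: eqP => [jk|_]; last by rewrite mulr0.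
  by move: ne; rewrite ik jk eqxx.
exists (P *m S1), (Q *m S2); split.
  by rewrite AE -SS trmx_mul !mulmxA.
rewrite !frob2_ortho //.
have sq t : \sum_(k < r) (if (t : nat) == k then Num.sqrt (ddn t) else 0) ^+ 2 =
            if (t < r)%N then ddn t else 0.
  rewrite -sum_ind; apply: eq_bigr => k _; case: ifP => _; last by rewrite expr0n.
  by rewrite sqr_sqrtr.
have f1 : frob2 S1 = trd D.
  have -> : frob2 S1 = \sum_(i < m) ddn i.
    apply: eq_bigr => i _.
    under eq_bigr => k _ do rewrite mxE.
    rewrite sq; case: ifP => // h; rewrite ddn_n //.
    move: h mr (ltn_ord i); rewrite /minn; case: ifP; lia.
  rewrite /ddn exchange_big; apply: eq_bigr => i' _.
  rewrite exchange_big; apply: eq_bigr => j _.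
  by rewrite sum_delta2 eq_sym.
have f2 : frob2 S2 = trd D.
  have -> : frob2 S2 = \sum_(j < n) ddn j.
    apply: eq_bigr => j _.
    under eq_bigr => k _ do rewrite mxE.
    rewrite sq; case: ifP => // h; rewrite ddn_m //.
    move: h mr (ltn_ord j); rewrite /minn; case: ifP; lia.
  rewrite /ddn exchange_big; apply: eq_bigr => i' _.
  rewrite exchange_big; apply: eq_bigr => j' _.
  under eq_bigr => j _ do rewrite andbC.
  by rewrite sum_delta2.
by rewrite f1 f2; field.
Qed.

End NUC.


Section CONT.
Variable R : realType.
Variable T : topologicalType.

Definition cR (f : T -> R) := continuous f.
Definition cmx m n (f : T -> 'M[R]_(m,n)) := forall i j, cR (fun v => f v i j).

Lemma cR_cst c : cR (fun _ => c).
Proof. exact: cst_continuous. Qed.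

Lemma cR_add f g : cR f -> cR g -> cR (fun v => f v + g v).
Proof. by move=> hf hg x; apply: continuousD; [exact: hf | exact: hg]. Qed.

Lemma cR_opp f : cR f -> cR (fun v => - f v).
Proof. by move=> hf x; apply: continuousN; exact: hf. Qed.

Lemma cR_mul f g : cR f -> cR g -> cR (fun v => f v * g v).
Proof. by move=> hf hg x; apply: continuousM; [exact: hf | exact: hg]. Qed.

Lemma cR_sum (I : Type) (s : seq I) (P : pred I) (F : I -> T -> R) :
  (forall i, cR (F i)) -> cR (fun v => \sum_(i <- s | P i) F i v).
Proof.
move=> hF; elim: s => [|x s IH].
  by under eq_fun => v do rewrite big_nil; exact: cR_cst.
under eq_fun => v do rewrite big_cons.
case: (P x) => //; exact: cR_add.
Qed.

Lemma cR_ext f g : (forall v, f v = g v) -> cR f -> cR g.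
Proof. by move=> e; have -> : g = f by apply: funext => v; rewrite e. Qed.

Lemma cmx_cst m n (A : 'M[R]_(m,n)) : cmx (fun _ => A).
Proof. by move=> i j; exact: cR_cst. Qed.

Lemma cmx_add m n (f g : T -> 'M[R]_(m,n)) : cmx f -> cmx g -> cmx (fun v => f v + g v).
Proof.
move=> hf hg i j; under eq_fun => v do rewrite mxE.
exact: cR_add.
Qed.

Lemma cmx_opp m n (f : T -> 'M[R]_(m,n)) : cmx f -> cmx (fun v => - f v).
Proof.
move=> hf i j; under eq_fun => v do rewrite mxE.
exact: cR_opp.
Qed.

Lemma cmx_mul m n k (f : T -> 'M[R]_(m,n)) (g : T -> 'M[R]_(n,k)) :
  cmx f -> cmx g -> cmx (fun v => f v *m g v).
Proof.
move=> hf hg i j; under eq_fun => v do rewrite mxE.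
apply: cR_sum => l; exact: cR_mul.
Qed.

Lemma cmx_tr m n (f : T -> 'M[R]_(m,n)) : cmx f -> cmx (fun v => (f v)^T).
Proof.
move=> hf i j; under eq_fun => v do rewrite mxE.
exact: hf.
Qed.

Lemma cmx_sum (I : Type) (s : seq I) (P : pred I) m n (F : I -> T -> 'M[R]_(m,n)) :
  (forall i, cmx (F i)) -> cmx (fun v => \sum_(i <- s | P i) F i v).
Proof.
move=> hF i j; under eq_fun => v do rewrite summxE.
by apply: cR_sum => l; exact: hF.
Qed.

Lemma cR_frob2 m n (f : T -> 'M[R]_(m,n)) : cmx f -> cR (fun v => frob2 (f v)).
Proof.
move=> hf; rewrite /frob2; apply: cR_sum => i; apply: cR_sum => j.
under eq_fun => v do rewrite expr2.
exact: cR_mul.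
Qed.

End CONT.

Lemma cmx_submxrow (R : realType) (T : topologicalType) (J : nat) (s : 'I_J -> nat) m
  (f : T -> 'M[R]_(m, \sum_(j < J) s j)) (j : 'I_J) :
  cmx f -> cmx (fun v => submxrow (f v) j).
Proof. by move=> hf a b; under eq_fun => v do rewrite mxE; exact: hf. Qed.

Section GMIN.
Variables (R : realType) (J K L p q rB rS : nat) (nj : 'I_J -> nat)
  (X : forall j : 'I_J, 'M[R]_(p, nj j)) (Y : forall j : 'I_J, 'M[R]_(q, nj j))
  (CY : 'I_J -> 'I_K -> bool) (CS : 'I_J -> 'I_L -> bool)
  (lamB : 'I_K -> R) (lamS : 'I_L -> R).
Hypotheses (lB : forall k, 0 < lamB k) (lS : forall l, 0 < lamS l).
Local Notation n := (\sum_(j < J) nj j).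

Definition Ity := (((('I_K * 'I_p * 'I_rB) + ('I_K * 'I_q * 'I_rB)) + ('I_L * 'I_p * 'I_rS))
   + ('I_L * 'I_n * 'I_rS))%type.
Local Notation N := #|{: Ity}|.

Definition co (v : 'rV[R]_N) (i : Ity) := v ord0 (enum_rank i).
Definition dUB v : 'I_K -> 'M[R]_(p, rB) :=
  fun k => \matrix_(a, b) co v (inl (inl (inl (k, a, b)))).
Definition dVB v : 'I_K -> 'M[R]_(q, rB) :=
  fun k => \matrix_(a, b) co v (inl (inl (inr (k, a, b)))).
Definition dUS v : 'I_L -> 'M[R]_(p, rS) :=
  fun l => \matrix_(a, b) co v (inl (inr (l, a, b))).
Definition dVS v : 'I_L -> 'M[R]_(n, rS) :=
  fun l => \matrix_(a, b) co v (inr (l, a, b)).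

Definition enc (UB : 'I_K -> 'M[R]_(p, rB)) (VB : 'I_K -> 'M[R]_(q, rB))
  (US : 'I_L -> 'M[R]_(p, rS)) (VS : 'I_L -> 'M[R]_(n, rS)) : 'rV[R]_N :=
  \row_t (match enum_val t with
          | inl (inl (inl (k, a, b))) => UB k a b
          | inl (inl (inr (k, a, b))) => VB k a b
          | inl (inr (l, a, b)) => US l a b
          | inr (l, a, b) => VS l a b end).

Lemma dec_enc UB VB US VS :
  let w := enc UB VB US VS in
  [/\ dUB w = UB, dVB w = VB, dUS w = US & dVS w = VS].
Proof.
split; apply: funext => k; apply/matrixP => a b; by rewrite !mxE /co mxE enum_rankK.
Qed.

Definition H v := @Gobj R J K L p q rB rS nj X Y CY lamB lamS (dUB v) (dVB v) (dUS v) (dVS v).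

Lemma cco i : cR (fun v : 'rV[R]_N => co v i).
Proof. exact: coord_continuous. Qed.

Lemma cdUB k : cmx (fun v => dUB v k).
Proof.
move=> a b; apply: (@cR_ext _ _ (fun v => co v (inl (inl (inl (k, a, b)))))); last exact: cco.
by move=> v; rewrite mxE.
Qed.
Lemma cdVB k : cmx (fun v => dVB v k).
Proof.
move=> a b; apply: (@cR_ext _ _ (fun v => co v (inl (inl (inr (k, a, b)))))); last exact: cco.
by move=> v; rewrite mxE.
Qed.
Lemma cdUS l : cmx (fun v => dUS v l).
Proof.
move=> a b; apply: (@cR_ext _ _ (fun v => co v (inl (inr (l, a, b))))); last exact: cco.
by move=> v; rewrite mxE.
Qed.
Lemma cdVS l : cmx (fun v => dVS v l).
Proof.
move=> a b; apply: (@cR_ext _ _ (fun v => co v (inr (l, a, b)))); last exact: cco.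
by move=> v; rewrite mxE.
Qed.

Lemma cont_H : continuous H.
Proof.
rewrite /H /Gobj.
apply: cR_mul; last exact: cR_cst.
apply: cR_add; first apply: cR_add.
- apply: cR_frob2; apply: cmx_add; first apply: cmx_add.
  + exact: cmx_cst.
  + apply: cmx_opp; apply: cmx_sum => k; apply: cmx_mul; last exact: cmx_cst.
    apply: cmx_mul; [exact: cdUB | apply: cmx_tr; exact: cdVB].
  + apply: cmx_opp; apply: cmx_sum => l; apply: cmx_mul; first exact: cdUS.
    apply: cmx_tr; exact: cdVS.
- apply: cR_sum => k; apply: cR_mul; first exact: cR_cst.
  by apply: cR_add; apply: cR_frob2; [exact: cdUB | exact: cdVB].
- apply: cR_sum => l; apply: cR_mul; first exact: cR_cst.
  by apply: cR_add; apply: cR_frob2; [exact: cdUS | exact: cdVS].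
Qed.


Lemma sum_single (I : finType) (F : I -> R) i : (forall j, 0 <= F j) -> F i <= \sum_j F j.
Proof. by move=> h; rewrite (bigD1 i) //= lerDl sumr_ge0. Qed.

Lemma Gobj_bounds UB VB US VS :
  let G := @Gobj R J K L p q rB rS nj X Y CY lamB lamS UB VB US VS in
  [/\ forall k, lamB k * (frob2 (UB k) + frob2 (VB k)) <= 2 * G,
      forall l, lamS l * (frob2 (US l) + frob2 (VS l)) <= 2 * G & 0 <= G].
Proof.
rewrite /Gobj.
set sB := \sum_(k < K) lamB k * _.
set sS := \sum_(l < L) lamS l * _.
set a := frob2 _.
have a0 : 0 <= a by apply: frob2_ge0.
have tB k : 0 <= lamB k * (frob2 (UB k) + frob2 (VB k)).
  by rewrite mulr_ge0 ?addr_ge0 ?frob2_ge0 // ltW.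
have tS l : 0 <= lamS l * (frob2 (US l) + frob2 (VS l)).
  by rewrite mulr_ge0 ?addr_ge0 ?frob2_ge0 // ltW.
have sB0 : 0 <= sB by apply: sumr_ge0 => k _.
have sS0 : 0 <= sS by apply: sumr_ge0 => l _.
split.
- move=> k; have := sum_single k tB; rewrite -/sB; lra.
- move=> l; have := sum_single l tS; rewrite -/sS; lra.
- lra.
Qed.

Definition feas v := forall l, inS (fun j => CS j l) (dUS v l *m (dVS v l)^T).

Local Open Scope classical_set_scope.

Lemma closed_feas : closed [set v | feas v].
Proof.
have key (e : 'rV[R]_N -> R) : cR e -> (forall v, feas v -> e v = 0) ->
    forall v, closure [set v | feas v] v -> e v = 0.
  move=> ce h v cv.
  have cl : closed (e @^-1` [set 0]).
    by apply: preimage_closed; [move=> x _; exact: ce | exact: closed_eq].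
  have sub : [set v | feas v] `<=` e @^-1` [set 0] by move=> w /h.
  move/closure_id: cl => cl.
  by have := closureS sub cv; rewrite -cl.
move=> v cv l j hj; apply/matrixP => a b.
rewrite [RHS]mxE.
have ce : cR (fun w => submxrow (dUS w l *m (dVS w l)^T) j a b).
  apply: cmx_submxrow; apply: cmx_mul; first exact: cdUS.
  apply: cmx_tr; exact: cdVS.
apply: (key _ ce _ v cv) => w fw.
by rewrite (fw l j hj) mxE.
Qed.


Definition lamI (i : Ity) : R := match i with
  | inl (inl (inl (k, _, _))) => lamB k
  | inl (inl (inr (k, _, _))) => lamB k
  | inl (inr (l, _, _)) => lamS l
  | inr (l, _, _) => lamS l end.

Lemma lamI_gt0 i : 0 < lamI i.
Proof. by case: i => [[[[[k a] b]|[[k a] b]]|[[l a] b]]|[[l a] b]] /=; [apply: lB|apply: lB|apply: lS|apply: lS]. Qed.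

Lemma coord_bound v i : lamI i * (co v i) ^+ 2 <= 2 * H v.
Proof.
have [hB hS _] := Gobj_bounds (dUB v) (dVB v) (dUS v) (dVS v).
have aux (lam x f1 f2 : R) : 0 < lam -> x ^+ 2 <= f1 -> 0 <= f2 ->
    lam * x ^+ 2 <= lam * (f1 + f2).
  by move=> l0 h1 h2; rewrite ler_wpM2l ?(ltW l0) // (le_trans h1) // lerDl.
case: i => [[[[[k a] b]|[[k a] b]]|[[l a] b]]|[[l a] b]] /=.
- apply: le_trans (hB k); apply: aux; rewrite ?frob2_ge0 //.
  by have := frob2_entry (dUB v k) a b; rewrite /dUB mxE.
- apply: le_trans (hB k); rewrite addrC; apply: aux; rewrite ?frob2_ge0 //.
  by have := frob2_entry (dVB v k) a b; rewrite /dVB mxE.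
- apply: le_trans (hS l); apply: aux; rewrite ?frob2_ge0 //.
  by have := frob2_entry (dUS v l) a b; rewrite /dUS mxE.
- apply: le_trans (hS l); rewrite addrC; apply: aux; rewrite ?frob2_ge0 //.
  by have := frob2_entry (dVS v l) a b; rewrite /dVS mxE.
Qed.

Lemma H_ge0 v : 0 <= H v.
Proof. by have [_ _ h] := Gobj_bounds (dUB v) (dVB v) (dUS v) (dVS v). Qed.

Lemma Gmin_sec : exists UB VB US VS,
    (forall l, inS (fun j => CS j l) (US l *m (VS l)^T)) /\
    forall UB' VB' US' VS', (forall l, inS (fun j => CS j l) (US' l *m (VS' l)^T)) ->
      @Gobj R J K L p q rB rS nj X Y CY lamB lamS UB VB US VS <=
      @Gobj R J K L p q rB rS nj X Y CY lamB lamS UB' VB' US' VS'.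
Proof.
pose H0 := H 0.
pose cb (t : 'I_N) := Num.sqrt (2 * H0 / lamI (enum_val t)).
pose Bx := [set v : 'rV[R]_N | forall t, `[- cb t, cb t] (v ord0 t)].
have cBx : compact Bx := @rV_compact _ _ (fun t => `[- cb t, cb t]) (fun t => @segment_compact R (- cb t) (cb t)).
pose A := Bx `&` [set v | feas v].
have cA : compact A := compact_closedI cBx (@closed_feas).
have zero_in : A 0.
  split.
    move=> t /=; rewrite in_itv /= mxE oppr_le0 sqrtr_ge0 //.
  move=> l j _.
  have -> : dUS 0 l = 0 by apply/matrixP => a b; rewrite /dUS /co !mxE.
  by rewrite mul0mx; apply/matrixP => a b; rewrite !mxE.
have [vmin vA hmin] := compact_EVT_min (ex_intro _ 0 zero_in) cA
   (continuous_subspaceT cont_H).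
exists (dUB vmin), (dVB vmin), (dUS vmin), (dVS vmin); split.
  by have [_] := set_mem vA.
move=> UB' VB' US' VS' f'.
have [e1 e2 e3 e4] := dec_enc UB' VB' US' VS'.
set w := enc UB' VB' US' VS' in e1 e2 e3 e4.
have Hw : H w = @Gobj R J K L p q rB rS nj X Y CY lamB lamS UB' VB' US' VS'.
  by rewrite /H e1 e2 e3 e4.
rewrite -Hw -/(H vmin).
have fw : feas w by rewrite /feas e3 e4.
have Hmin0 : H vmin <= H 0 by apply: hmin; apply: mem_set.
case: (pselect (Bx w)) => [bw|nbw].
  by apply: hmin; apply: mem_set; split.
move/existsNP: nbw => [t nt].
have := coord_bound w (enum_val t); rewrite /co enum_valK.
set x := w ord0 t in nt *.
have cb0 : 0 <= cb t := sqrtr_ge0 _.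
have lt0 := lamI_gt0 (enum_val t).
have H00 : 0 <= H0 := H_ge0 0.
have cbx : cb t < `|x|.
  rewrite ltNge; apply/negP => h; apply: nt; rewrite /= in_itv /= -ler_norml //.
have cb2 : cb t ^+ 2 = 2 * H0 / lamI (enum_val t).
  by rewrite /cb sqr_sqrtr //; apply: divr_ge0; [apply: mulr_ge0 | exact: ltW].
have x2 : cb t ^+ 2 < x ^+ 2.
  rewrite -(real_normK (num_real x)); have := normr_ge0 x; nra.
have : 2 * H0 < lamI (enum_val t) * x ^+ 2.
  have e : lamI (enum_val t) * (2 * H0 / lamI (enum_val t)) = 2 * H0.
    by field; apply: lt0r_neq0.
  by rewrite -e ltr_pM2l // -cb2.
rewrite -/H0 in Hmin0.
lra.
Qed.

End GMIN.


Section MAIN.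
Variable R : realType.

Lemma svd_diag_spec m n (A : 'M[R]_(m,n)) : exists P Q, is_svd A P (svd_diag A) Q.
Proof.
rewrite /svd_diag.
apply: (epsilon_spec (inhabits (0 : 'M[R]_(m,n))) (fun D => exists U V, is_svd A U D V)).
by have [P [D [Q h]]] := svd_exists A; exists D, P, Q.
Qed.

Lemma nucnorm_le m n r (U : 'M[R]_(m,r)) (V : 'M[R]_(n,r)) :
  nucnorm (U *m V^T) <= (frob2 U + frob2 V) / 2.
Proof.
have [P [Q h]] := svd_diag_spec (U *m V^T).
exact: (nuc_le h).
Qed.

Lemma nucnorm_fact m n r (A : 'M[R]_(m,n)) : (minn m n <= r)%N ->
  exists (U : 'M[R]_(m,r)) (V : 'M[R]_(n,r)),
    A = U *m V^T /\ (frob2 U + frob2 V) / 2 = nucnorm A.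
Proof.
have [P [Q h]] := svd_diag_spec A.
exact: (nuc_fact h).
Qed.


Lemma FleG (J K L p q rB rS : nat) (nj : 'I_J -> nat)
  (X : forall j : 'I_J, 'M[R]_(p, nj j)) (Y : forall j : 'I_J, 'M[R]_(q, nj j))
  (CY : 'I_J -> 'I_K -> bool) (lamB : 'I_K -> R) (lamS : 'I_L -> R)
  B S UB VB US VS :
  (forall k, 0 <= lamB k) -> (forall l, 0 <= lamS l) ->
  (forall k, B k = UB k *m (VB k)^T) -> (forall l, S l = US l *m (VS l)^T) ->
  Fobj X Y CY lamB lamS B S <= @Gobj R J K L p q rB rS nj X Y CY lamB lamS UB VB US VS.
Proof.
move=> lB lS BE SE; rewrite /Fobj /Gobj.
set r1 := (X in frob2 X / 2).
set r2 := (X in frob2 X + _ + _).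
have -> : r1 = r2.
  rewrite /r1 /r2; congr (_ - _ - _).
    by apply: eq_bigr => k _; rewrite BE.
  by apply: eq_bigr => l _; rewrite SE.
have hB : \sum_k lamB k * nucnorm (B k) <=
   (\sum_k lamB k * (frob2 (UB k) + frob2 (VB k))) / 2.
  rewrite mulr_suml; apply: ler_sum => k _; rewrite -mulrA ler_wpM2l // BE.
  exact: nucnorm_le.
have hS : \sum_l lamS l * nucnorm (S l) <=
   (\sum_l lamS l * (frob2 (US l) + frob2 (VS l))) / 2.
  rewrite mulr_suml; apply: ler_sum => l _; rewrite -mulrA ler_wpM2l // SE.
  exact: nucnorm_le.
lra.
Qed.

Lemma FeqG (J K L p q rB rS : nat) (nj : 'I_J -> nat)
  (X : forall j : 'I_J, 'M[R]_(p, nj j)) (Y : forall j : 'I_J, 'M[R]_(q, nj j))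
  (CY : 'I_J -> 'I_K -> bool) (lamB : 'I_K -> R) (lamS : 'I_L -> R)
  (B : 'I_K -> 'M[R]_(p, q)) (S : 'I_L -> 'M[R]_(p, \sum_(j < J) nj j)) :
  (minn p q <= rB)%N -> (minn p (\sum_(j < J) nj j) <= rS)%N ->
  exists UB VB US VS,
  [/\ (forall k, B k = UB k *m (VB k)^T), (forall l, S l = US l *m (VS l)^T) &
  @Gobj R J K L p q rB rS nj X Y CY lamB lamS UB VB US VS = Fobj X Y CY lamB lamS B S].
Proof.
move=> hrB hrS.
have [fB hfB] := @fin_all_exists _ (fun _ => ('M[R]_(p, rB) * 'M[R]_(q, rB))%type)
   (fun k f => B k = f.1 *m f.2^T /\ (frob2 f.1 + frob2 f.2) / 2 = nucnorm (B k))
   (fun k => let: ex_intro U (ex_intro V h) := nucnorm_fact (B k) hrB in ex_intro _ (U, V) h).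
have [fS hfS] := @fin_all_exists _
   (fun _ => ('M[R]_(p, rS) * 'M[R]_(\sum_(j < J) nj j, rS))%type)
   (fun l f => S l = f.1 *m f.2^T /\ (frob2 f.1 + frob2 f.2) / 2 = nucnorm (S l))
   (fun l => let: ex_intro U (ex_intro V h) := nucnorm_fact (S l) hrS in ex_intro _ (U, V) h).
exists (fun k => (fB k).1), (fun k => (fB k).2), (fun l => (fS l).1), (fun l => (fS l).2).
split; [by move=> k; case: (hfB k) | by move=> l; case: (hfS l) |].
rewrite /Fobj /Gobj.
set r1 := (X in frob2 X / 2).
set r2 := (X in frob2 X + _ + _).
have -> : r2 = r1.
  rewrite /r1 /r2; congr (_ - _ - _).
    by apply: eq_bigr => k _; case: (hfB k) => -> _.
  by apply: eq_bigr => l _; case: (hfS l) => -> _.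
have hB : \sum_k lamB k * nucnorm (B k) =
   (\sum_k lamB k * (frob2 (fB k).1 + frob2 (fB k).2)) / 2.
  rewrite mulr_suml; apply: eq_bigr => k _; rewrite -mulrA.
  by case: (hfB k) => _ ->.
have hS : \sum_l lamS l * nucnorm (S l) =
   (\sum_l lamS l * (frob2 (fS l).1 + frob2 (fS l).2)) / 2.
  rewrite mulr_suml; apply: eq_bigr => l _; rewrite -mulrA.
  by case: (hfS l) => _ ->.
by rewrite hB hS; field.
Qed.

End MAIN.

Lemma Gmin_exists (R : realType) (J K L p q rB rS : nat) (nj : 'I_J -> nat)
  (X : forall j : 'I_J, 'M[R]_(p, nj j)) (Y : forall j : 'I_J, 'M[R]_(q, nj j))
  (CY : 'I_J -> 'I_K -> bool) (CS : 'I_J -> 'I_L -> bool)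
  (lamB : 'I_K -> R) (lamS : 'I_L -> R) :
  (forall k, 0 < lamB k) -> (forall l, 0 < lamS l) ->
  exists UB VB US VS,
    (forall l, inS (fun j => CS j l) (US l *m (VS l)^T)) /\
    forall UB' VB' US' VS', (forall l, inS (fun j => CS j l) (US' l *m (VS' l)^T)) ->
      @Gobj R J K L p q rB rS nj X Y CY lamB lamS UB VB US VS <=
      @Gobj R J K L p q rB rS nj X Y CY lamB lamS UB' VB' US' VS'.
Proof. by move=> lB lS; apply: Gmin_sec. Qed.

Unset Implicit Arguments.

Theorem theorem1 (R : realType) (J K L p q : nat) (nj : 'I_J -> nat)
  (X : forall j : 'I_J, 'M[R]_(p, nj j)) (Y : forall j : 'I_J, 'M[R]_(q, nj j))
  (CY : 'I_J -> 'I_K -> bool) (CS : 'I_J -> 'I_L -> bool)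
  (lamB : 'I_K -> R) (lamS : 'I_L -> R) (rB rS : nat) :
  (0 < J)%N -> (0 < p)%N -> (0 < q)%N -> (forall j, (0 < nj j)%N) ->
  (forall k, 0 < lamB k) -> (forall l, 0 < lamS l) ->
  (minn p q <= rB)%N -> (minn p (\sum_(j < J) nj j) <= rS)%N ->
  let feasF := fun (S : 'I_L -> 'M[R]_(p, \sum_(j < J) nj j)) =>
    forall l, inS (fun j => CS j l) (S l) in
  let feasG := fun (US : 'I_L -> 'M[R]_(p, rS))
                   (VS : 'I_L -> 'M[R]_(\sum_(j < J) nj j, rS)) =>
    forall l, inS (fun j => CS j l) (US l *m (VS l)^T) in
  let F := Fobj X Y CY lamB lamS in
  let G := @Gobj R J K L p q rB rS nj X Y CY lamB lamS in
  let minF := fun B S => feasF S /\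
    forall B' S', feasF S' -> F B S <= F B' S' in
  let minG := fun UB VB US VS => feasG US VS /\
    forall UB' VB' US' VS', feasG US' VS' ->
      G UB VB US VS <= G UB' VB' US' VS' in
  (exists B S UB VB US VS,
     minF B S /\ minG UB VB US VS /\ F B S = G UB VB US VS) /\
  (forall B S, minF B S <->
     exists UB VB US VS, minG UB VB US VS /\
       (forall k, B k = UB k *m (VB k)^T) /\
       (forall l, S l = US l *m (VS l)^T)).
Proof.
move=> _ _ _ _ lB lS hrB hrS feasF feasG F G minF minG.
have lB0 k : 0 <= lamB k by apply: ltW.
have lS0 l : 0 <= lamS l by apply: ltW.
have [UB [VB [US [VS [fG mG]]]]] := @Gmin_exists R J K L p q rB rS nj X Y CY CS lamB lamS lB lS.
pose Bs := fun k => UB k *m (VB k)^T.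
pose Ss := fun l => US l *m (VS l)^T.
have FG B S UB' VB' US' VS' : (forall k, B k = UB' k *m (VB' k)^T) ->
    (forall l, S l = US' l *m (VS' l)^T) -> F B S <= G UB' VB' US' VS'.
  by move=> h1 h2; apply: FleG.
have GF B S : feasF S -> exists UB' VB' US' VS', [/\ feasG US' VS',
    (forall k, B k = UB' k *m (VB' k)^T), (forall l, S l = US' l *m (VS' l)^T) &
    G UB' VB' US' VS' = F B S].
  move=> fS; have [UB' [VB' [US' [VS' [h1 h2 h3]]]]] := FeqG X Y CY lamB lamS B S hrB hrS.
  exists UB', VB', US', VS'; split => // l; rewrite -h2; exact: fS.
have GleF B S : feasF S -> G UB VB US VS <= F B S.
  move=> fS; have [UB' [VB' [US' [VS' [h0 h1 h2 h3]]]]] := GF B S fS.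
  by rewrite -h3; apply: mG.
have fSs : feasF Ss by [].
have minFs : minF Bs Ss.
  split => // B' S' fS'; apply: le_trans (GleF _ _ fS').
  exact: FG.
have eqFG : F Bs Ss = G UB VB US VS.
  by apply/eqP; rewrite eq_le FG //= GleF.
split.
  exists Bs, Ss, UB, VB, US, VS; split => //; split => //.
move=> B S; split.
  move=> [fS mF].
  have [UB' [VB' [US' [VS' [h0 h1 h2 h3]]]]] := GF B S fS.
  exists UB', VB', US', VS'; split => //; split => // UB'' VB'' US'' VS'' fG''.
  rewrite h3; apply: le_trans (mF Bs Ss fSs) _; rewrite eqFG; exact: mG.
move=> [UB' [VB' [US' [VS' [[fG' mG'] [h1 h2]]]]]].
have fS : feasF S by move=> l; rewrite h2; exact: fG'.
split => // B' S' fS'.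
apply: le_trans (FG _ _ _ _ _ _ h1 h2) _.
have [UB'' [VB'' [US'' [VS'' [h0 _ _ h3]]]]] := GF B' S' fS'.
rewrite -h3; exact: mG'.
Qed.
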